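(* Let $m \equiv 1 \pmod 4$ with $m > 1$, $n = 3^m - 1$, $v = (3^{(m-1)/2}+1)/2$ and $\delta = (3^{(m-1)/2}+13)/2$. Then $\gcd(v,n) = 1$, and, setting $T_{(1,2,m)}(v) = \{ vi \bmod n : i \in T_{(1,2,m)}\}$, we have $\{1, 2, \ldots, \delta-1\} \subseteq T_{(1,2,m)}(v)$.
   Context: For an integer $0 \le j \le n-1$ with $3$-adic expansion $j = \sum_{t=0}^{m-1} j_t 3^t$, $j_t \in \{0,1,2\}$, let $w_3(j) = \sum_{t=0}^{m-1} j_t$. For distinct $i_1,i_2 \in \{0,1,2,3\}$, $T_{(i_1,i_2,m)} = \{1 \le j \le n-1 : w_3(j) \equiv i_1 \text{ or } i_2 \pmod 4\}$. For an integer $b$, $b \bmod n$ is the unique $b_0 \in \{0,\ldots,n-1\}$ with $b \equiv b_0 \pmod n$. *)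

(* Defs.v *)
From mathcomp Require Import all_boot.
Set Implicit Arguments. Unset Strict Implicit. Unset Printing Implicit Defensive.

(* Sum of the base-3 digits of j, using the m-digit 3-adic expansion
   j = \sum_{t<m} j_t 3^t (valid for 0 <= j <= 3^m - 1). *)
Definition w3 (m j : nat) : nat := \sum_(t < m) ((j %/ 3 ^ t) %% 3).

Definition T (i1 i2 m : nat) (j : nat) : bool :=
  [&& 1 <= j, j <= (3 ^ m - 1) - 1 &
      ((w3 m j %% 4 == i1) || (w3 m j %% 4 == i2))].

Definition Tv (i1 i2 m v : nat) (k : nat) : Prop :=
  exists i, T i1 i2 m i /\ k = (v * i) %% (3 ^ m - 1).

(* Main.v *)
Require Import Defs.
From mathcomp Require Import all_boot zify ring.

Lemma w3S p x : w3 p.+1 x = x %% 3 + w3 p (x %/ 3).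
Proof.
rewrite /w3 big_ord_recl /= expn0 divn1; congr (_ + _).
apply: eq_bigr => t _; by rewrite expnS divnMA.
Qed.

Lemma w3_0 p : w3 p 0 = 0.
Proof. by rewrite /w3 big1 // => t _; rewrite div0n mod0n. Qed.

Lemma w3_le p x : w3 p x <= 2 * p.
Proof.
elim: p x => [|p IH] x; first by rewrite /w3 big_ord0.
rewrite w3S; have := IH (x %/ 3); have : x %% 3 < 3 by rewrite ltn_mod. lia.
Qed.

Lemma w3_split p q a b : a < 3 ^ p -> w3 (p + q) (a + 3 ^ p * b) = w3 p a + w3 q b.
Proof.
elim: p a => [|p IH] a ha.
  have -> : a = 0 by move: ha; rewrite expn0; lia.
  by rewrite expn0 mul1n !add0n w3_0.
rewrite addSn !w3S expnS.
set Y := 3 ^ p in IH ha *; set X := Y * b.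
have -> : (a + 3 * Y * b) %% 3 = a %% 3 by rewrite -mulnA -/X; lia.
have -> : (a + 3 * Y * b) %/ 3 = a %/ 3 + Y * b by rewrite -mulnA -/X; lia.
rewrite IH; first lia.
by move: ha; rewrite expnS -/Y; lia.
Qed.

Lemma w3_compl p a : a < 3 ^ p -> w3 p (3 ^ p - 1 - a) = 2 * p - w3 p a.
Proof.
elim: p a => [|p IH] a ha.
  by rewrite /w3 !big_ord0.
rewrite !w3S; rewrite expnS in ha *.
set Y := 3 ^ p in IH ha *.
have Y1 : 1 <= Y by rewrite /Y expn_gt0.
have -> : (3 * Y - 1 - a) %% 3 = 2 - a %% 3 by lia.
have -> : (3 * Y - 1 - a) %/ 3 = Y - 1 - a %/ 3 by lia.
rewrite IH; last lia.
have := w3_le p (a %/ 3). have : a %% 3 < 3 by rewrite ltn_mod. lia.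
Qed.

Lemma w3_form h c0 A B : c0 < 3 -> A < 3 ^ h -> B < 3 ^ h ->
  w3 (1 + (h + h)) (c0 + 3 ^ 1 * (A + 3 ^ h * B)) = c0 + w3 h A + w3 h B.
Proof.
move=> hc hA hB; rewrite w3_split ?w3_split //.
rewrite w3S /w3 big_ord0 addn0 addnA; congr (_ + _ + _); lia.
Qed.

Lemma w3_small p c : c < 9 -> w3 p.+2 c = c %% 3 + c %/ 3.
Proof.
move=> hc; rewrite !w3S.
have -> : c %/ 3 %/ 3 = 0 by lia.
rewrite w3_0; lia.
Qed.

Lemma modeq v i k q n : v * i = q * n + k -> k < n -> v * i %% n = k.
Proof. by move=> -> kn; rewrite modnMDl modn_small. Qed.

Lemma sp x H : 0 < x -> x <= H -> x * (H - 1) = (H - 1 - (x - 1)) + H * (x - 1).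
Proof. move=> h1 h2; nia. Qed.

Lemma prep v H n : 2 * v = H + 1 -> n + 1 = 3 * H * H -> 9 <= H ->
  exists w, [/\ v = w + 1, H = 2 * w + 1, n = 12 * w * w + 12 * w + 2 & 4 <= w].
Proof. move=> e1 e2 e3; exists (v - 1); split; nia. Qed.
Arguments prep {v H n}.

Lemma LA v H n a : 2 * v = H + 1 -> n + 1 = 3 * H * H -> 9 <= H -> 1 <= a -> 2 * a < v ->
  v * (1 + 3 * (2 * a) * (H - 1)) = a * n + (v - 2 * a) /\ 1 + 3 * (2 * a) * (H - 1) <= n - 1.
Proof.
move=> e1 e2 e3 a1 a2; case: (prep e1 e2 e3) => w [ev eH en w4]; subst v H n.
have -> : 2 * w + 1 - 1 = 2 * w by lia.
have E : (w + 1) * (1 + 3 * (2 * a) * (2 * w)) + 2 * a = a * (12 * w * w + 12 * w + 2) + (w + 1) by nia.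
split; last first.
  have aw : a * w <= w * w by apply: leq_mul; lia.
  have -> : 1 + 3 * (2 * a) * (2 * w) = 1 + 12 * (a * w) by ring.
  have -> : 12 * w * w + 12 * w + 2 - 1 = 12 * (w * w) + 12 * w + 1 by lia.
  lia.
move: E; set L := (w + 1) * _; set R := a * _; lia.
Qed.

Lemma LB v H n j : 2 * v = H + 1 -> n + 1 = 3 * H * H -> 9 <= H -> 1 <= j <= 2 ->
  [/\ v * (n - (6 * j * (H - 1) - 1)) = (v - j) * n + (v + 2 * j),
      6 * j * (H - 1) - 1 < n + 1, 1 <= n - (6 * j * (H - 1) - 1) &
      n - (6 * j * (H - 1) - 1) <= n - 1].
Proof.
move=> e1 e2 e3 /andP[j1 j2]; case: (prep e1 e2 e3) => w [ev eH en w4]; subst v H n.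
have -> : 2 * w + 1 - 1 = 2 * w by lia.
have [->|->] : j = 1 \/ j = 2 by lia.
- have -> : 6 * 1 * (2 * w) - 1 = 12 * w - 1 by lia.
  have -> : 12 * w * w + 12 * w + 2 - (12 * w - 1) = 12 * w * w + 3 by lia.
  split; nia.
- have -> : 6 * 2 * (2 * w) - 1 = 24 * w - 1 by lia.
  have -> : 12 * w * w + 12 * w + 2 - (24 * w - 1) = 12 * w * w + 3 - 12 * w by nia.
  split; nia.
Qed.

Lemma LC v H n j : 2 * v = H + 1 -> n + 1 = 3 * H * H -> 9 <= H -> 1 <= j -> 2 * j <= H ->
  [/\ v * (n - 3 * (2 * j) * (H - 1)) = (v - j) * n + 2 * j,
      3 * (2 * j) * (H - 1) < n + 1, 1 <= n - 3 * (2 * j) * (H - 1) &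
      n - 3 * (2 * j) * (H - 1) <= n - 1].
Proof.
move=> e1 e2 e3 j1 j2; case: (prep e1 e2 e3) => w [ev eH en w4]; subst v H n.
have -> : 2 * w + 1 - 1 = 2 * w by lia.
have -> : 12 * w * w + 12 * w + 2 - 3 * (2 * j) * (2 * w) = 12 * w * w + 12 * w + 2 - 12 * j * w by nia.
split; nia.
Qed.

Arguments LA {v H n a}.
Arguments LB {v H n j}.
Arguments LC {v H n j}.

Theorem lemma3 (m : nat) (hm4 : m %% 4 = 1) (hm1 : 1 < m) :
  let n := 3 ^ m - 1 in
  let v := (3 ^ ((m - 1) %/ 2) + 1) %/ 2 in
  let delta := (3 ^ ((m - 1) %/ 2) + 13) %/ 2 in
  coprime v n /\ (forall k, 1 <= k <= delta - 1 -> Tv 1 2 m v k).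
Proof.
have [s ems s1] : exists2 s, m = 1 + (2 * s + 2 * s) & 1 <= s.
  by exists (m %/ 4); lia.
have eh : (m - 1) %/ 2 = 2 * s by lia.
rewrite eh.
set h := 2 * s in ems eh *.
set H := 3 ^ h.
have H9 : 9 <= H.
  by rewrite /H (_ : 9 = 3 ^ 2) // leq_exp2l // /h; lia.
have H4 : H %% 4 = 1.
  rewrite /H /h expnM /=; elim: (s) => [|t IH] //.
  by rewrite expnS; lia.
have eN : 3 ^ m = 3 * H * H.
  by rewrite ems expnD expnD -/H expn1 mulnA.
move=> n v delta.
have en : n + 1 = 3 * H * H by rewrite /n eN; lia.
have ev : 2 * v = H + 1 by rewrite /v; lia.
have ed : delta - 1 = v + 5 by rewrite /delta; lia.
have hn : n = 3 ^ m - 1 by [].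
clearbody n v delta.
split.
  have -> : n = (6 * H - 6) * v + 2 by nia.
  rewrite /coprime gcdnMDl -/(coprime v 2) coprimen2.
  have : v %% 2 = 1 by lia.
  by rewrite modn2; case: (odd v).
move=> k; rewrite ed => /andP [k1 k2].
have hw := w3_le h.
have hc := w3_compl.
have hN : 3 ^ m = n + 1 by lia.
have eh2 : h = (2 * (s - 1)).+2 by rewrite /h; lia.
have w2 : forall c, c < 9 -> w3 h c = c %% 3 + c %/ 3.
  by move=> c; rewrite eh2; apply: w3_small.
have Hh : 3 ^ h = H by [].
have wf : forall c0 A B, c0 < 3 -> A < H -> B < H ->
    w3 m (c0 + 3 * (A + H * B)) = c0 + w3 h A + w3 h B.
  by move=> c0 A B *; have := w3_form h c0 A B; rewrite expn1 Hh -ems; apply.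
have wc : forall y, y < n + 1 -> w3 m (n - y) = 2 * m - w3 m y.
  move=> y hy; rewrite (_ : n - y = 3 ^ m - 1 - y); last lia.
  by rewrite hc // hN.
have ww : forall A, A < H -> w3 h (H - 1 - A) = 2 * h - w3 h A.
  by move=> A hA; rewrite -Hh hc.
have nbig : H <= n by nia.
have vH : v <= H by lia.
case: (boolP (odd k)) => ko.
- have {}ko : k %% 2 = 1 by rewrite modn2 ko.
  case: (leqP k v) => kv.
  +
    have [a ea av] : exists2 a, k = v - 2 * a & 2 * a < v.
      by exists ((v - k) %/ 2); lia.
    case: (posnP a) => a0.
    * exists 1; split; last first.
        symmetry; rewrite -hn; apply: (@modeq _ _ _ 0); lia.
      have W : w3 m 1 = 1.
        by have := wf 1 0 0; rewrite !muln0 !addn0 !w3_0 addn0; apply; lia.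
      rewrite /T -hn W; apply/and3P; split => //; lia.
    * have [EA BA] := LA ev en H9 a0 av.
      exists (1 + 3 * (2 * a) * (H - 1)); split; last first.
        symmetry; rewrite -hn; apply: (@modeq _ _ _ a); [by rewrite EA ea | lia].
      have W : w3 m (1 + 3 * (2 * a) * (H - 1)) = 1 + 2 * h.
        rewrite -mulnA sp; try lia.
        rewrite wf; try lia.
        rewrite ww; last lia.
        have := hw (2 * a - 1); lia.
      rewrite /T -hn W; apply/and3P; split; [lia | exact BA | ].
      apply/orP; left; apply/eqP; rewrite /h; lia.
  +
    have [j [ej j1 j2]] : exists j, [/\ k = v + 2 * j, 1 <= j & j <= 2].
      by exists ((k - v) %/ 2); split; lia.
    have jj : 1 <= j <= 2 by rewrite j1 j2.
    have [EB yB iB1 iB2] := LB ev en H9 jj.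
    exists (n - (6 * j * (H - 1) - 1)); split; last first.
      symmetry; rewrite -hn; apply: (@modeq _ _ _ (v - j)); [by rewrite EB ej | lia].
    have W : w3 m (6 * j * (H - 1) - 1) = 1 + 2 * h.
      rewrite (_ : 6 * j * (H - 1) = 3 * (2 * j * (H - 1))); last by rewrite !mulnA.
      rewrite sp; try lia.
      set X := H * (2 * j - 1).
      rewrite (_ : 3 * (H - 1 - (2 * j - 1) + X) - 1 = 2 + 3 * ((H - 1 - 2 * j) + X)); last lia.
      rewrite wf; try lia.
      rewrite ww; last lia.
      rewrite !w2; try lia.
    rewrite /T -hn wc //.
    rewrite W; apply/and3P; split; [exact iB1 | exact iB2 | ].
    apply/orP; left; apply/eqP; rewrite ems /h; lia.
- have {}ko : k %% 2 = 0 by rewrite modn2 (negbTE ko).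
  have [j ej] : exists j, k = 2 * j by exists (k %/ 2); lia.
  case: (leqP k H) => kH.
  + have j1 : 1 <= j by lia.
    have jH : 2 * j <= H by lia.
    have [EC yC iC1 iC2] := LC ev en H9 j1 jH.
    subst k.
    exists (n - 3 * (2 * j) * (H - 1)); split; last first.
      symmetry; rewrite -hn; apply: (@modeq _ _ _ (v - j)); [exact EC | lia].
    have W : w3 m (3 * (2 * j) * (H - 1)) = 2 * h.
      rewrite -mulnA sp; try lia.
      rewrite -[3 * _]add0n.
      rewrite wf; try lia.
      rewrite ww; last lia.
      have := hw (2 * j - 1); lia.
    rewrite /T -hn wc //.
    rewrite W; apply/and3P; split; [exact iC1 | exact iC2 | ].
    apply/orP; right; apply/eqP; rewrite ems /h; lia.
  + exists 2; split; last first.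
      symmetry; rewrite -hn; apply: (@modeq _ _ _ 0); lia.
    have W : w3 m 2 = 2.
      by have := wf 2 0 0; rewrite !muln0 !addn0 !w3_0 addn0; apply; lia.
    rewrite /T -hn W; apply/and3P; split => //; lia.
Qed.
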